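(* Let $G$ be a finite directed acyclic graph whose input nodes (the nodes with no incoming edge) are the $d$ coordinates of a vector $\bm x$, and let $o$ be a leaf node of $G$. For an input node $x$, let $\mathcal P(x,o)$ be the set of directed paths from $x$ to $o$; for a path ${\bm p}$ let $\tilde{\bm p}$ be the path without its starting node, and $d_p$ the in-degree of node $p$. Assume the symmetry assumption (S): all input nodes $x$ have the same multiset $\{d_{\bm p}\}_{{\bm p}\in\mathcal P(x,o)}$ of path-degrees, where the path-degree $d_{\bm p}$ of ${\bm p}$ is the multiset $\{d_p: p\in\tilde{\bm p}\}$. Then for every input node $x$, $$\sum_{{\bm p}\in\mathcal P(x,o)}\prod_{p\in\tilde{\bm p}}\frac1{d_p}=\frac1d.$$ *)

(* Defs.v *)
From mathcomp Require Import all_boot all_order all_algebra.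
Set Implicit Arguments. Unset Strict Implicit. Unset Printing Implicit Defensive.
Import Order.TTheory GRing.Theory Num.Theory.

Section DAG.
Variables (V : finType) (e : rel V).

Definition acyclic : Prop := forall (v : V) (s : seq V), ~ path e v (rcons s v).

Definition indeg (v : V) : nat := #|[set u | e u v]|.

Definition inputs : {set V} := [set v | indeg v == 0%N].

Definition leaf (o : V) : Prop := forall v, ~~ e o v.

(* A directed path x = p_0 -> p_1 -> ... -> p_n = o is represented by the
   sequence s = [:: p_1; ...; p_n] of its nodes WITHOUT the starting node,
   i.e. s is the path \tilde p. *)
Definition is_dpath (x o : V) (s : seq V) : bool := path e x s && (last x s == o).

(* Paths with n edges are enumerated as n-tuples; in an acyclic graph
   every path has fewer than #|V| edges, so this lists P(x,o) exactly,
   each path once. *)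
Definition dpaths (x o : V) : seq (seq V) :=
  flatten [seq map (@tval n V) (enum [pred t : n.-tuple V | is_dpath x o t])
          | n <- iota 0 #|V|].

(* path-degree d_p: the multiset {d_p : p in \tilde p}, represented
   canonically as a sorted list of in-degrees *)
Definition path_degree (s : seq V) : seq nat := sort leq (map indeg s).

Definition symmetry_S (o : V) : Prop :=
  forall x y, x \in inputs -> y \in inputs ->
    perm_eq (map path_degree (dpaths x o)) (map path_degree (dpaths y o)).

End DAG.

(* Main.v *)
Require Import Defs.
From mathcomp Require Import all_boot all_order all_algebra.
Import Order.TTheory GRing.Theory Num.Theory.
Local Open Scope ring_scope.

Section Aux.
Variables (R : realFieldType) (V : finType) (e : rel V).
Local Notation d v := ((indeg e v)%:R : R).

Definition cw (u v : V) : R := if e u v then (d v)^-1 else 0.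
Fixpoint Wf n (x v : V) : R :=
  match n with 0%N => (x == v)%:R | n.+1 => \sum_y cw x y * Wf n y v end.

Lemma tuple_sum n x v :
  \sum_(t : n.-tuple V | is_dpath e x v t) \prod_(p <- t) (d p)^-1 = Wf n x v.
Proof.
elim: n x => [|n IH] x /=.
  rewrite big_mkcond (big_pred1 [tuple]) => [|t]; last by rewrite /= [t]tuple0; apply/esym/eqP.
  by rewrite /is_dpath /=; case: (x == v); rewrite ?big_nil.
transitivity (\sum_y \sum_(t : n.-tuple V)
   (if is_dpath e x v (y :: t) then \prod_(p <- y :: t) (d p)^-1 else 0)).
  rewrite pair_big /= big_mkcond /=.
  rewrite (reindex (fun p : V * n.-tuple V => [tuple of p.1 :: p.2])) //=.
  exists (fun t => (thead t, [tuple of behead t])) => [[y t] _|t _] /=.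
    by congr pair; apply: val_inj.
  by rewrite [RHS]tuple_eta.
apply: eq_bigr => y _.
rewrite /is_dpath /cw /=; case: (e x y) => /=; last by rewrite big1 ?mul0r.
rewrite -IH mulr_sumr [RHS]big_mkcond; apply: eq_bigr => t _; rewrite /is_dpath.
by case: ifP; rewrite ?big_cons ?mulr0.
Qed.

Lemma dpaths_sum x v :
  \sum_(s <- dpaths e x v) \prod_(p <- s) (d p)^-1 = \sum_(n < #|V|) Wf n x v.
Proof.
rewrite /dpaths big_flatten /= big_map -(big_mkord xpredT (fun n => Wf n x v)) /index_iota subn0.
apply: eq_bigr => n _; rewrite big_map big_enum /= -tuple_sum.
by apply: eq_bigl => t; rewrite inE.
Qed.

Lemma sumc y : \sum_x cw x y = (y \notin inputs e)%:R.
Proof.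
rewrite (eq_bigr (fun x => (e x y)%:R * (d y)^-1)); last first.
  by move=> x _; rewrite /cw; case: (e x y); rewrite ?mul1r ?mul0r.
rewrite -mulr_suml -natr_sum.
have -> : (\sum_x (e x y : nat))%N = indeg e y.
  by rewrite /indeg -sum1_card [RHS]big_mkcond /=; apply: eq_bigr => x _; rewrite inE; case: (e x y).
rewrite inE; case: eqP => [->|/eqP H]; first by rewrite mul0r.
by rewrite mulfV // pnatr_eq0.
Qed.

Lemma telescope k v :
  \sum_(n < k) \sum_(x in inputs e) Wf n x v = 1 - \sum_x Wf k x v.
Proof.
elim: k => [|k IH].
  rewrite big_ord0 /= (bigD1 v) //= eqxx big1 => [|x /negbTE -> //].
  by rewrite addr0 subrr.
rewrite big_ord_recr /= IH exchange_big /=.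
have -> : \sum_j \sum_i cw i j * Wf k j v = \sum_(j | j \notin inputs e) Wf k j v.
  rewrite [RHS]big_mkcond; apply: eq_bigr => j _.
  by rewrite -mulr_suml sumc; case: (j \in inputs e); rewrite /= ?mul1r ?mul0r.
rewrite [X in 1 - X + _](bigID (fun x => x \in inputs e)) /=.
rewrite opprD -!addrA; congr (_ + _).
by rewrite addrC -addrA addrN addr0.
Qed.

Lemma path_uniq (Hacyc : acyclic e) x s : path e x s -> uniq (x :: s).
Proof.
elim/last_ind: s => [|s y IH] //.
rewrite rcons_path => /andP[Hp He].
rewrite -rcons_cons rcons_uniq IH // andbT.
apply/negP => Hy.
case/splitPl: Hy Hp He => p1 p2 Hl.
rewrite cat_path last_cat Hl => /andP[_ Hp2] He.
by apply: (Hacyc y p2); rewrite rcons_path Hp2 He.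
Qed.

Lemma nilp (Hacyc : acyclic e) x v : Wf #|V| x v = 0.
Proof.
rewrite -tuple_sum big_pred0 // => t.
apply/negP => /andP[Hp _].
have := path_uniq Hacyc _ _ Hp => /card_uniqP.
have := max_card (mem (x :: t)) => Hle Heq.
by move: Hle; rewrite Heq /= size_tuple ltnn.
Qed.

End Aux.

Theorem lemma3 (R : realFieldType) (V : finType) (e : rel V) (o : V)
  (Hacyc : acyclic e) (Hleaf : leaf e o) (HS : symmetry_S e o)
  (x : V) (Hx : x \in inputs e) :
  \sum_(s <- dpaths e x o) \prod_(p <- s) ((indeg e p)%:R : R)^-1
    = (#|inputs e|%:R : R)^-1.
Proof.
set w := fun y => \sum_(s <- dpaths e y o) \prod_(p <- s) ((indeg e p)%:R : R)^-1.
have Hw y : w y = \sum_(ds <- map (path_degree e) (dpaths e y o))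
                     \prod_(k <- ds) (k%:R : R)^-1.
  rewrite /w big_map; apply: eq_bigr => s _.
  by rewrite /path_degree (perm_big _ (permEl (perm_sort _ _))) big_map.
have Hsym y : y \in inputs e -> w y = w x.
  by move=> Hy; rewrite !Hw; apply: perm_big; apply: HS.
have Htot : \sum_(y in inputs e) w y = 1.
  rewrite (eq_bigr (fun y => \sum_(n < #|V|) Wf R V e n y o)); last first.
    by move=> y _; rewrite /w dpaths_sum.
  by rewrite exchange_big /= telescope big1 ?subr0 // => y _; rewrite nilp.
have cI : (#|inputs e|%:R : R) != 0.
  by rewrite pnatr_eq0 -lt0n; apply/card_gt0P; exists x.
rewrite (eq_bigr (fun _ => w x)) ?sumr_const in Htot; last by move=> y Hy; apply: Hsym.
rewrite -mulr_natl in Htot; apply: (mulfI cI); rewrite mulfV //; exact: Htot.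
Qed.
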